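(* Let $G$ be a planar trivalent graph with a perfect matching $M$. If $G\setminus M$ (the graph with all vertices of $G$ and the edges not in $M$) contains a cycle with exactly $3$ edges, then $\langle G:M\rangle_2(1)=0$.
   Context: Graphs are finite and may have multiple edges; trivalent means every vertex has degree $3$. The $2$-factor polynomial $\langle G:M\rangle_2(z)\in\mathbb{Z}[z,z^{-1}]$ is defined as follows. Embed $G$ in the $2$-sphere. For a matching edge $e=uv$, let $\alpha,\beta$ be the other two edge-ends at $u$ and $\gamma,\delta$ the other two at $v$, labelled so that in a small disk around $e$ they appear in cyclic order $\alpha,\beta,\delta,\gamma$. The $0$-resolution at $e$ deletes $e,u,v$ and joins $\alpha$ to $\gamma$ and $\beta$ to $\delta$ by disjoint arcs; the $1$-resolution joins $\alpha$ to $\delta$ and $\beta$ to $\gamma$ by two arcs crossing once. For a state $s:M\to\{0,1\}$, resolving every matching edge accordingly yields $c(s)$ immersed closed curves, and $\langle G:M\rangle_2(z)=\sum_s(-z)^{|s|}(z+z^{-1})^{c(s)}$, where $|s|$ is the number of edges assigned $1$. This is independent of the chosen embedding. *)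

(* Defs.v *)
From HB Require Import structures.
From mathcomp Require Import all_boot all_order all_algebra all_fingroup.
Set Implicit Arguments.
Unset Strict Implicit.
Unset Printing Implicit Defensive.
Import GRing.Theory.

(* A trivalent multigraph G (loops and multiple edges allowed) is encoded by
   darts (half-edges): [D] is the finite set of darts, [vt d] is the vertex
   of dart [d], and [ed] is a fixed-point-free involution pairing the two
   darts of each edge.  An embedding of G in the sphere is a rotation system
   [rot] (a cyclic order of the darts around each vertex, read
   counterclockwise) whose genus is 0 (Euler formula, per component). *)
Section TwoFactor.
Variables (V D : finType) (vt : D -> V) (ed rot : {perm D}).

Definition trivalent_graph : Prop :=
  [/\ forall d, ed d != d,
      forall d, ed (ed d) = d &
      forall v, #|[set d | vt d == v]| = 3].

(* rot permutes the darts around each vertex, without fixed point; since each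
   vertex has 3 darts, rot induces a 3-cycle at each vertex. *)
Definition rotation_system : Prop :=
  forall d, vt (rot d) = vt d /\ rot d != d.

Definition n_faces : nat := #|porbits (ed * rot)%g|.

(* connected components of the graph (every vertex carries darts) *)
Definition n_components : nat :=
  #|[set orbit 'P <<[set ed; rot]>> d | d : D]|.

(* genus-0 condition : V - E + F = 2 on each component *)
Definition spherical_embedding : Prop :=
  (#|V| + n_faces = #|D| %/ 2 + 2 * n_components)%N.

(* a perfect matching, given by the set of darts of its edges *)
Definition perfect_matching (M : {set D}) : Prop :=
  (forall d, d \in M -> ed d \in M) /\
  (forall v, #|[set d in M | vt d == v]| = 1%N).

Definition triangle_off_matching (M : {set D}) : Prop :=
  exists d1 d2 d3 : D,
    [/\ d1 \notin M, d2 \notin M & d3 \notin M] /\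
    [/\ vt (ed d1) = vt d2, vt (ed d2) = vt d3 & vt (ed d3) = vt d1] /\
    [/\ vt d1 != vt d2, vt d2 != vt d3 & vt d3 != vt d1].

(* States s : M -> {0,1} are encoded by the set S of darts of the matching
   edges assigned 1 (S \subset M, closed under ed); |s| = #|S| / 2. *)
Definition state (M S : {set D}) : bool :=
  (S \subset M) && [forall d in S, ed d \in S].

(* Resolution at the matching edge e = uv with dart m at u (ed m at v):
   with alpha = rot m, beta = rot^2 m at u and gamma = rot^2 (ed m),
   delta = rot (ed m) at v, the cyclic order around e is alpha,beta,delta,gamma.
   0-resolution: alpha-gamma, beta-delta; 1-resolution: alpha-delta, beta-gamma. *)
Definition jump (M S : {set D}) (d d' : D) : bool :=
  [exists m in M,
     ((d == rot m) &&
        (d' == if m \in S then rot (ed m) else rot (rot (ed m))))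
  || ((d == rot (rot m)) &&
        (d' == if m \in S then rot (rot (ed m)) else rot (ed m)))].

Definition curve_rel (M S : {set D}) : rel D :=
  fun d d' => [&& d \notin M, d' \notin M &
                  [|| d' == ed d, jump M S d d' | jump M S d' d]].

Definition n_curves (M S : {set D}) : nat :=
  n_comp (curve_rel M S) (~: M).

Definition two_factor_eval (R : unitRingType) (M : {set D}) (z : R) : R :=
  (\sum_(S : {set D} | state M S)
     (- z) ^+ (#|S| %/ 2) * (z + z^-1) ^+ n_curves M S)%R.

End TwoFactor.

(* Main.v *)
Require Import Defs.
From HB Require Import structures.
From mathcomp Require Import all_boot all_order all_algebra all_fingroup.
Set Implicit Arguments. Unset Strict Implicit. Unset Printing Implicit Defensive.
Import GRing.Theory.

Lemma connect_prop (T : finType) (e : rel T) (P : pred T) x y :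
  (forall u v, e u v -> P u = P v) -> connect e x y -> P x = P y.
Proof.
move=> H /connectP [p pth ->]; elim: p x pth => //= z p IH x /andP[exz pth].
by rewrite (H _ _ exz); apply: IH.
Qed.

Definition validL (T : finType) (e : rel T) (a L : {set T}) : bool :=
  (L \subset a) && [forall x, forall y, e x y ==> ((x \in L) == (y \in L))].

Lemma count_colorings (T : finType) (e : rel T) (a : {set T}) :
  symmetric e -> (forall x y, e x y -> x \in a) ->
  #|[set L | validL e a L]| = 2 ^ n_comp e a.
Proof.
move=> sym ea.
have csym := sym_connect_sym sym.
have eaP : forall u v, e u v -> (u \in a) = (v \in a).
  by move=> u v euv; rewrite (ea _ _ euv) (ea v u) // sym.
pose R := [set x in a | roots e x].
have -> : n_comp e a = #|R|.
  by apply: eq_card => x; rewrite !inE andbC.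
rewrite -card_powerset.
pose g := fun P : {set T} => [set x in a | fingraph.root e x \in P].
have ginj : {in powerset R &, injective g}.
  move=> P P'; rewrite !inE => sP sP' gP.
  have key : forall Q Q' : {set T}, Q \subset R -> g Q = g Q' -> Q \subset Q'.
    move=> Q Q' sQ gQ; apply/subsetP => x xQ.
    have := subsetP sQ x xQ; rewrite inE => /andP[xa /eqP rx].
    have : x \in g Q by rewrite inE xa rx.
    by rewrite gQ inE rx => /andP[].
  by apply/eqP; rewrite eqEsubset (key _ _ sP gP) (key _ _ sP' (esym gP)).
rewrite -(card_in_imset ginj); apply: eq_card => L.
rewrite [in LHS]inE; apply/idP/idP.
- case/andP => La /forallP H.
  have Hp : forall u v, e u v -> (u \in L) = (v \in L).
    by move=> u v euv; have := H u => /forallP /(_ v); rewrite euv => /eqP.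
  apply/imsetP; exists (L :&: R).
    by rewrite inE subsetIr.
  apply/setP => x; rewrite !inE.
  case xa: (x \in a) => /=; last first.
    by apply/negbTE; apply: contraFN xa => /(subsetP La).
  have ra : fingraph.root e x \in a by rewrite -(connect_prop eaP (connect_root e x)). rewrite (connect_prop Hp (connect_root e x)) (roots_root csym).
  by case: (_ \in L) => //=; symmetry; apply/andP; split => //; exact: ra.
- move=> /imsetP [P _ ->]; rewrite /validL; apply/andP; split.
    by apply/subsetP => x; rewrite inE => /andP[].
  apply/forallP => x; apply/forallP => y; apply/implyP => exy.
  have eyx : e y x by rewrite sym. rewrite !inE (ea _ _ exy) (ea _ _ eyx) /=.
  by rewrite (fingraph.rootP csym (connect1 exy)).
Qed.

Lemma rot2_neq (V D : finType) (vt : D -> V) (rot : {perm D}) :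
  (forall v, #|[set d | vt d == v]| = 3) -> rotation_system vt rot ->
  forall d, rot (rot d) != d.
Proof.
move=> c3 rs d; apply/eqP => rrd.
have [vx xd] := rs d.
pose Vd := [set e | vt e == vt d].
have sub : [set d; rot d] \subset Vd.
  by apply/subsetP => z; rewrite !inE => /orP[]/eqP->; rewrite ?vx eqxx.
have c2 : #|[set d; rot d]| = 2 by rewrite cards2 eq_sym xd.
have : #|Vd :\: [set d; rot d]| == 1 by rewrite cardsD (setIidPr sub) c2 c3.
case/cards1P => y Hy.
have yin : y \in Vd :\: [set d; rot d] by rewrite Hy set11.
have ryin : rot y \in Vd :\: [set d; rot d].
  move: yin; rewrite !inE => /andP[/norP[yd yx] /eqP vy].
  have [vry ry] := rs y.
  rewrite vry vy eqxx andbT; apply/norP; split.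
    by rewrite -{1}rrd (inj_eq perm_inj).
  by rewrite (inj_eq perm_inj).
move: ryin; rewrite Hy inE => /eqP ryy.
by have := (rs y).2; rewrite ryy eqxx.
Qed.

Lemma M_uniq (V D : finType) (vt : D -> V) (M : {set D}) m m' :
  (forall v, #|[set d in M | vt d == v]| = 1) -> m \in M -> m' \in M ->
  vt m = vt m' -> m = m'.
Proof.
move=> M1 mM m'M e.
have /cards1P [z Hz] : #|[set d in M | vt d == vt m]| == 1 by rewrite M1.
have : m \in [set d in M | vt d == vt m] by rewrite inE mM eqxx.
have : m' \in [set d in M | vt d == vt m] by rewrite inE m'M e eqxx.
by rewrite Hz !inE => /eqP -> /eqP ->.
Qed.

Lemma rot_notM (V D : finType) (vt : D -> V) (rot : {perm D}) (M : {set D}) m :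
  (forall v, #|[set d | vt d == v]| = 3) -> rotation_system vt rot ->
  (forall v, #|[set d in M | vt d == v]| = 1) -> m \in M ->
  (rot m \notin M) && (rot (rot m) \notin M).
Proof.
move=> c3 rs M1 mM; apply/andP; split; apply/negP => H.
  have := M_uniq M1 mM H (esym (rs m).1) => E.
  by have := (rs m).2; rewrite -E eqxx.
have E := M_uniq M1 mM H (esym (etrans (rs (rot m)).1 (rs m).1)).
by have := rot2_neq c3 rs m; rewrite -E eqxx.
Qed.

Lemma vertex3 (T : finType) (A : {set T}) a b c x :
  #|A| = 3 -> a \in A -> b \in A -> c \in A -> a != b -> a != c -> b != c ->
  x \in A -> [|| x == a, x == b | x == c].
Proof.
move=> cA aA bA cA' ab ac bc xA.
have sub : [set a; b; c] \subset A.
  by apply/subsetP => z; rewrite !inE => /orP[/orP[]|]/eqP->.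
have c3 : #|[set a; b; c]| = 3.
  by rewrite setUC !cardsU1 cards1 !inE (eq_sym c a) (eq_sym c b) (negbTE ab) (negbTE ac) (negbTE bc).
have : [set a; b; c] == A by rewrite eqEcard sub cA c3.
by move/eqP => E; move: xA; rewrite -E !inE -orbA.
Qed.

Lemma vertex_nonM (V D : finType) (vt : D -> V) (M : {set D}) m t t' :
  (forall v, #|[set d | vt d == v]| = 3) -> m \in M -> t \notin M -> t' \notin M ->
  t != t' -> vt t = vt m -> vt t' = vt m ->
  forall x, vt x = vt m -> x \notin M -> (x == t) || (x == t').
Proof.
move=> c3 mM tM t'M tt' vt1 vt2 x vx xM.
have mt : m != t by apply: contraNneq tM => <-.
have mt' : m != t' by apply: contraNneq t'M => <-.
have := @vertex3 _ [set d | vt d == vt m] m t t' x (c3 _).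
rewrite !inE vt1 vt2 vx eqxx => /(_ isT isT isT mt mt' tt' isT) /or3P[|->|->]; rewrite ?orbT //.
by move/eqP => E; move: xM; rewrite E mM.
Qed.

Definition tog (D : finType) (S T : {set D}) := (S :\: T) :|: (T :\: S).

Lemma togE (D : finType) (S T : {set D}) z : (z \in tog S T) = (z \in S) (+) (z \in T).
Proof. by rewrite /tog in_setU !in_setD; case: (z \in S); case: (z \in T). Qed.

Lemma togK (D : finType) (T : {set D}) : involutive (fun S : {set D} => tog S T).
Proof. by move=> S; apply/setP => z; rewrite !togE; case: (z \in S); case: (z \in T). Qed.

Lemma switch_valid (V D : finType) (vt : D -> V) (ed rot : {perm D}) (M S L : {set D}) m l :
  (forall v, #|[set d | vt d == v]| = 3) ->
  (forall d, ed (ed d) = d) -> rotation_system vt rot ->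
  (forall d, d \in M -> ed d \in M) -> (forall v, #|[set d in M | vt d == v]| = 1) ->
  m \in M -> validL (curve_rel ed rot M S) (~: M) L ->
  (forall x, vt x = vt m -> x \notin M -> (x \in L) = l) ->
  validL (curve_rel ed rot M (tog S [set m; ed m])) (~: M) L.
Proof.
move=> c3 edK rs Mcl M1 mM /andP[Lsub /forallP Hv] Hl.
have Hv' : forall x y, curve_rel ed rot M S x y -> (x \in L) = (y \in L).
  by move=> x y cxy; have := Hv x => /forallP /(_ y) /implyP /(_ cxy) /eqP.
have edM : ed m \in M by apply: Mcl.
have /andP[r1m r2m] := rot_notM c3 rs M1 mM.
have /andP[r1e r2e] := rot_notM c3 rs M1 edM.
have h1 : (rot m \in L) = l by apply: Hl => //; exact: (rs m).1.
have h2 : (rot (rot m) \in L) = l.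
  by apply: Hl => //; exact: (etrans (rs (rot m)).1 (rs m).1).
have j1 : curve_rel ed rot M S (rot m)
            (if m \in S then rot (ed m) else rot (rot (ed m))).
  rewrite /curve_rel r1m /=; apply/andP; split; first by case: ifP.
  apply/orP; right; apply/orP; left; apply/existsP; exists m.
  by rewrite mM !eqxx.
have j2 : curve_rel ed rot M S (rot (rot m))
            (if m \in S then rot (rot (ed m)) else rot (ed m)).
  rewrite /curve_rel r2m /=; apply/andP; split; first by case: ifP.
  apply/orP; right; apply/orP; left; apply/existsP; exists m.
  by rewrite mM !eqxx orbT.
have h34 : ((rot (ed m) \in L) = l) /\ ((rot (rot (ed m)) \in L) = l).
  move: (Hv' _ _ j1) (Hv' _ _ j2); rewrite h1 h2.
  by case: (m \in S) => <- <-.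
case: h34 => h3 h4.
have E4 : forall x, [|| x == rot m, x == rot (rot m), x == rot (ed m)
                       | x == rot (rot (ed m))] -> (x \in L) = l.
  by move=> x /or4P[]/eqP->.
have JC : forall x y, jump ed rot M (tog S [set m; ed m]) x y ->
            ((x \in L) = (y \in L)) \/ jump ed rot M S x y.
  move=> x y /existsP [m' /andP[m'M body]].
  case: (boolP (m' \in [set m; ed m])) => m'T.
    left; move: m'T; rewrite !inE => /orP[]/eqP Em'; rewrite Em' ?edK in body;
    by move: body => /orP[]/andP[/eqP-> /eqP->]; case: ifP => _;
      rewrite (E4 _) ?(E4 _) ?eqxx ?orbT.
  right; apply/existsP; exists m'; rewrite m'M /=.
  by move: body; rewrite togE (negbTE m'T) addbF.
apply/andP; split => //; apply/forallP => x; apply/forallP => y.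
apply/implyP => cxy; apply/eqP.
move: cxy; rewrite {1}/curve_rel => /and3P[xM yM /or3P[exy | jxy | jyx]].
- by apply: Hv'; rewrite /curve_rel xM yM exy.
- case: (JC _ _ jxy) => // j.
  by apply: Hv'; rewrite /curve_rel xM yM j orbT.
- case: (JC _ _ jyx) => [->|j] //.
  by apply: Hv'; rewrite /curve_rel xM yM j !orbT.
Qed.

Lemma sign_tog (D : finType) (ed : {perm D}) (S : {set D}) m :
  (forall d, ed d != d) -> (forall d, ed (ed d) = d) ->
  (forall d, d \in S -> ed d \in S) ->
  (((-1) ^+ (#|tog S [set m; ed m]| %/ 2) : int) = - (-1) ^+ (#|S| %/ 2))%R.
Proof.
move=> edfix edK Scl.
have c2 : #|[set m; ed m]| = 2 by rewrite cards2 eq_sym edfix.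
have divE : forall n, (2 + n) %/ 2 = (n %/ 2).+1.
  by move=> n; rewrite -[2 + n]/(1 * 2 + n) divnMDl.
case mS : (m \in S).
  have sub : [set m; ed m] \subset S.
    by apply/subsetP => z; rewrite !inE => /orP[]/eqP->; rewrite ?mS ?Scl.
  have -> : tog S [set m; ed m] = S :\: [set m; ed m].
    apply/setP => z; rewrite togE in_setD.
    by case: (boolP (z \in [set m; ed m])) => zT; rewrite ?(subsetP sub _ zT) ?(negbTE zT) ?addbF ?andbT.
  have := cardsID [set m; ed m] S; rewrite (setIidPr sub) c2 => <-.
  by rewrite divE exprS mulN1r opprK.
have edmS : (ed m \in S) = false.
  by apply/negbTE; apply/negP => /Scl; rewrite edK mS.
have -> : tog S [set m; ed m] = [set m; ed m] :|: S.
  apply/setP => z; rewrite togE in_setU !inE.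
  case: (eqVneq z m) => [->|zm]; first by rewrite mS.
  case: (eqVneq z (ed m)) => [->|zem]; first by rewrite edmS orbT.
  by rewrite addbF.
rewrite cardsU c2.
have -> : [set m; ed m] :&: S = set0.
  apply/setP => z; rewrite !inE.
  case: (eqVneq z m) => [->|zm]; first by rewrite mS.
  case: (eqVneq z (ed m)) => [->|zem]; first by rewrite edmS andbF.
  by [].
by rewrite cards0 subn0 divE exprS mulN1r.
Qed.

Lemma curve_sym (D : finType) (ed rot : {perm D}) (M S : {set D}) :
  (forall d, ed (ed d) = d) -> symmetric (curve_rel ed rot M S).
Proof.
move=> edK x y; rewrite /curve_rel.
have -> : (y == ed x) = (x == ed y).
  by apply/eqP/eqP => ->; rewrite edK.
by case: (x \notin M) (y \notin M) (x == ed y) (jump ed rot M S x y)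
  (jump ed rot M S y x) => [] [] [] [] [].
Qed.

Unset Implicit Arguments.

Theorem lemma2p9 (V D : finType) (vt : D -> V) (ed rot : {perm D})
    (M : {set D}) :
  trivalent_graph vt ed ->
  rotation_system vt rot ->
  spherical_embedding V ed rot ->
  perfect_matching vt ed M ->
  triangle_off_matching vt ed M ->
  two_factor_eval ed rot M (1 : int) = 0%R.
Proof.
move=> [edfix edK c3] rs _ [Mcl M1] [d1 [d2 [d3 [[n1 n2 n3] [[e1 e2 e3] [v12 v23 v31]]]]]].
have edM : forall d, (ed d \in M) = (d \in M).
  by move=> d; apply/idP/idP => [/Mcl|/Mcl //]; rewrite edK.
have [mA HA] : exists m, [set d in M | vt d == vt d1] = [set m] by apply/cards1P; rewrite M1.
have [mB HB] : exists m, [set d in M | vt d == vt d2] = [set m] by apply/cards1P; rewrite M1.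
have [mC HC] : exists m, [set d in M | vt d == vt d3] = [set m] by apply/cards1P; rewrite M1.
have : mA \in [set d in M | vt d == vt d1] by rewrite HA set11.
rewrite inE => /andP[mAM /eqP vA].
have : mB \in [set d in M | vt d == vt d2] by rewrite HB set11.
rewrite inE => /andP[mBM /eqP vB].
have : mC \in [set d in M | vt d == vt d3] by rewrite HC set11.
rewrite inE => /andP[mCM /eqP vC].
have ne1 : ed d1 \notin M by rewrite edM.
have ne2 : ed d2 \notin M by rewrite edM.
have ne3 : ed d3 \notin M by rewrite edM.
have dA : d1 != ed d3.
  apply/eqP => E; move: v23; rewrite -e1 E edK eqxx //.
have dB : ed d1 != d2.
  apply/eqP => E; move: v31; rewrite -e2 -E edK eqxx //.
have dC : ed d2 != d3.
  apply/eqP => E; move: v12; rewrite -e3 -E edK eqxx //.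
have vtA := vertex_nonM c3 mAM n1 ne3 dA (esym vA) (etrans e3 (esym vA)).
have vtB := vertex_nonM c3 mBM ne1 n2 dB (etrans e1 (esym vB)) (esym vB).
have vtC := vertex_nonM c3 mCM ne2 n3 dC (etrans e2 (esym vC)) (esym vC).
pose mc (L : {set D}) := if (d1 \in L) == (d3 \in L) then mA
                         else if (d1 \in L) == (d2 \in L) then mB else mC.
pose phi (p : {set D} * {set D}) := (tog p.1 [set mc p.2; ed (mc p.2)], p.2).
pose P (p : {set D} * {set D}) :=
  state ed M p.1 && (p.2 \in [set L | validL (curve_rel ed rot M p.1) (~: M) L]).
pose F (p : {set D} * {set D}) := ((-1) ^+ (#|p.1| %/ 2) : int)%R.
have phiK : involutive phi.
  by move=> [S L]; rewrite /phi /= togK.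
have mcM : forall L, mc L \in M by move=> L; rewrite /mc; case: ifP => _ //; case: ifP.
have Pphi : forall p, P p -> P (phi p) /\ F (phi p) = (- F p)%R.
  move=> [S L]; rewrite /P /F /phi /= inE => /andP[/andP[SM /forall_inP Scl] vL].
  split; last by apply: sign_tog.
  apply/andP; split.
    apply/andP; split.
      apply/subsetP => z; rewrite togE.
      case zS: (z \in S) => /=; first by rewrite (subsetP SM).
      rewrite !inE => /orP[]/eqP->; by rewrite ?mcM ?edM.
    apply/forall_inP => z; rewrite !togE.
    have -> : (ed z \in S) = (z \in S).
      by apply/idP/idP => [/Scl|/Scl //]; rewrite edK.
    have -> : (ed z \in [set mc L; ed (mc L)]) = (z \in [set mc L; ed (mc L)]).
      by rewrite !inE (inj_eq perm_inj) -{1}(edK (mc L)) (inj_eq perm_inj) orbC.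
    by [].
  rewrite inE.
  have Hv' : forall x y, curve_rel ed rot M S x y -> (x \in L) = (y \in L).
    move: vL => /andP[_ /forallP Hv] x y cxy.
    by have := Hv x => /forallP /(_ y) /implyP /(_ cxy) /eqP.
  have edL : forall d, d \notin M -> (ed d \in L) = (d \in L).
    move=> d dM; symmetry; apply: Hv'.
    by rewrite /curve_rel dM edM dM eqxx.
  rewrite /mc; case: ifP => [Eac|Nac].
    apply: (switch_valid (l := d1 \in L)) => //.
    move=> x vx xM; case/orP: (vtA x vx xM) => /eqP-> => //.
    by rewrite edL // (eqP Eac).
  case: ifP => [Eab|Nab].
    apply: (switch_valid (l := d1 \in L)) => //.
    move=> x vx xM; case/orP: (vtB x vx xM) => /eqP->; rewrite ?edL //.
    by rewrite (eqP Eab).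
  apply: (switch_valid (l := d2 \in L)) => //.
  move=> x vx xM; case/orP: (vtC x vx xM) => /eqP->; rewrite ?edL //.
  by move: Nac Nab; case: (d1 \in L); case: (d2 \in L); case: (d3 \in L).
rewrite /two_factor_eval invr1.
have H2 : forall S, ((1 + 1 : int) ^+ n_curves ed rot M S)%R =
   (#|[set L | validL (curve_rel ed rot M S) (~: M) L]|)%:R%R.
  move=> S; rewrite /n_curves count_colorings ?natrX //.
    exact: curve_sym.
  by move=> x y; rewrite /curve_rel inE => /andP[].
rewrite (eq_bigr (fun S => \sum_(L in [set L | validL (curve_rel ed rot M S) (~: M) L])
                             ((-1) ^+ (#|S| %/ 2) : int))%R); last first.
  by move=> S _; rewrite H2 sumr_const mulr_natr.
rewrite pair_big_dep /=.
set Sig := (\sum_(p | _) _)%R.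
have : Sig = (- Sig)%R.
  rewrite {1}/Sig (reindex_inj (can_inj phiK)) /=.
  rewrite -sumrN.
  have PP : forall p, P (phi p) = P p.
    move=> p; apply/idP/idP => Hp.
      by have := (Pphi _ Hp).1; rewrite phiK.
    exact: (Pphi _ Hp).1.
  apply: eq_big => p; first exact: PP.
  move=> Hp; have Hp' : P p by rewrite -PP; exact: Hp.
  exact: (Pphi _ Hp').2.
move/eqP; rewrite -addr_eq0 -mulr2n.
by rewrite Num.Theory.mulrn_eq0 /= => /eqP.
Qed.
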